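(* Let $D$ be a digraph with at least one cycle, with girth $g$ and circumference $c$, such that $g-1\le c-g+2$ (i.e. $g\le \frac{c+3}{2}$). Then $\chi_A(D)\le c-g+2$.
   Context: Digraphs are finite and loopless; cycles are directed. The girth (resp. circumference) is the length of a shortest (resp. longest) directed cycle. $\chi_A(D)$ is the minimum number of colors in a vertex coloring of $D$ in which every color class induces an acyclic subdigraph. *)

(* Defs.v *)
From mathcomp Require Import all_boot.
From Stdlib Require Import ClassicalEpsilon.
Set Implicit Arguments. Unset Strict Implicit. Unset Printing Implicit Defensive.

Section Digraph.
Variables (V : finType) (e : rel V).

Definition loopless : Prop := forall x : V, ~~ e x x.

(* a directed cycle: a nonempty sequence of pairwise distinct vertices
   v_0 ... v_{l-1} with arcs v_i -> v_{i+1} and v_{l-1} -> v_0;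
   its length is the number of vertices (= number of arcs). *)
Definition dcycle (s : seq V) : bool := [&& s != [::], uniq s & cycle e s].

Definition has_cycle : Prop := exists s, dcycle s.

Definition is_girth (g : nat) : Prop :=
  (exists s, dcycle s /\ size s = g) /\ (forall s, dcycle s -> g <= size s).

Definition is_circumference (c : nat) : Prop :=
  (exists s, dcycle s /\ size s = c) /\ (forall s, dcycle s -> size s <= c).

(* acyclic k-colouring: every colour class induces an acyclic subdigraph,
   i.e. no directed cycle has all its vertices of one colour. *)
Definition acyclic_coloring (k : nat) (f : V -> 'I_k) : Prop :=
  forall (i : 'I_k) (s : seq V), dcycle s -> ~ all (fun x => f x == i) s.

Definition acyclic_colorable (k : nat) : Prop :=
  exists f : V -> 'I_k, acyclic_coloring f.

End Digraph.

Definition pb (P : Prop) : bool :=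
  if excluded_middle_informative P then true else false.

(* chi_A(D): least k admitting an acyclic k-colouring (0 if none exists,
   which cannot happen for loopless digraphs). *)
Definition dichromatic (V : finType) (e : rel V) : nat :=
  match excluded_middle_informative (exists k, pb (acyclic_colorable e k)) with
  | left H => ex_minn H
  | right _ => 0
  end.

(* Main.v *)
Require Import Defs.
From mathcomp Require Import all_boot.
From Stdlib Require Import ClassicalEpsilon.
From mathcomp Require Import zify.
Set Implicit Arguments. Unset Strict Implicit. Unset Printing Implicit Defensive.

Lemma pbP (P : Prop) : pb P = true <-> P.
Proof. rewrite /pb; case: excluded_middle_informative => //. Qed.

Lemma exists_max (T : Type) (P : T -> Prop) (sz : T -> nat) (B : nat) :
  (exists x, P x) -> (forall x, P x -> sz x <= B) ->
  exists x, P x /\ forall y, P y -> sz y <= sz x.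
Proof.
move=> [x0 Px0] HB.
have ex : exists n, pb (exists x, P x /\ sz x = n) by exists (sz x0); apply/pbP; exists x0.
have bnd : forall n, pb (exists x, P x /\ sz x = n) -> n <= B.
  by move=> n /pbP [x [Px <-]]; apply: HB.
case: (ex_maxnP ex bnd) => m /pbP [x [Px Hx]] Hm.
exists x; split => // y Py; rewrite Hx; apply: Hm; apply/pbP; by exists y.
Qed.

Section Proof.
Variables (V : finType) (e : rel V).

Lemma cyc_of (v0 u : V) r1 r2 : path e v0 (r1 ++ u :: r2) ->
  uniq (v0 :: r1 ++ u :: r2) -> e u v0 -> dcycle e (v0 :: rcons r1 u).
Proof.
have E : v0 :: r1 ++ u :: r2 = (v0 :: rcons r1 u) ++ r2 by rewrite /= -cats1 -catA.
have E2 : r1 ++ u :: r2 = rcons r1 u ++ r2 by rewrite -cats1 -catA.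
move=> Hp Hu Heu; rewrite /dcycle /=.
rewrite E cat_uniq in Hu; case/andP: Hu => Hu _.
move: Hu => /= ->; rewrite rcons_path last_rcons Heu andbT.
by rewrite E2 cat_path in Hp; case/andP: Hp.
Qed.

Variables (g c k : nat).
Hypothesis Hloop : loopless e.
Hypothesis Hcyc : forall s, dcycle e s -> g <= size s <= c.
Hypothesis Hg : 2 <= g.
Hypothesis Hk : c - g + 1 < k.

Lemma color_set : forall A : {set V}, exists f : V -> 'I_k,
  forall i s, dcycle e s -> all (fun x => x \in A) s -> ~ all (fun x => f x == i) s.
Proof.
have k0 : 0 < k by lia.
move=> A; have [n] := ubnP #|A|; elim: n A => // n IH A Hn.
case: (set_0Vmem A) => [A0 | [v A_v]].
  exists (fun _ => Ordinal k0) => i s /andP [s0 _] Hall _.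
  case: s s0 Hall => // x s _ /= /andP []; by rewrite A0 inE.
pose P (q : V * seq V) := [&& q.1 \in A, all (fun x => x \in A) q.2,
                            uniq (q.1 :: q.2) & path e q.1 q.2].
have [[v0 rest] [Pq Hmax]] : exists q, P q /\ forall y, P y -> size y.2 <= size q.2.
  apply: (@exists_max _ (fun q => P q) (fun q => size q.2) #|V|).
    by exists (v, [::]); rewrite /P /= A_v.
  move=> [x q] /and4P [_ _ Hu _] /=.
  apply: leq_trans (uniq_leq_size (s1 := q) _ _) _; first by case/andP: Hu.
    by move=> y _; exact: mem_enum.
  by rewrite cardT.
case/and4P: Pq => /= Av0 Arest Urest Prest.
have HA' : #|A :\ v0| < n.
  move: Hn; rewrite (cardsD1 v0 A) Av0 add1n ltnS => H; exact: H.
have [f Hf] := IH _ HA'.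
pose N := [set u in A | e u v0].
have HN : forall u, u \in N -> u \in rest.
  move=> u; rewrite inE => /andP [Au Heu].
  have Hne : u != v0 by apply/eqP => Huv; move: (Hloop u); rewrite {2}Huv Heu.
  case Hin: (u \in v0 :: rest).
    by move: Hin; rewrite inE (negbTE Hne).
  have : P (u, v0 :: rest).
    by rewrite /P /= Au Av0 Arest Hin Urest Heu Prest.
  by move/Hmax => /=; rewrite ltnn.
have Hidx : forall u, u \in N -> g - 2 <= index u rest <= c - 2.
  move=> u uN; have uR := HN u uN.
  move: uN; rewrite inE => /andP [_ Heu].
  move: Prest Urest; case/splitPr: uR => r1 r2 Hp Hu.
  have Hc := Hcyc (cyc_of Hp Hu Heu).
  move: Hc; rewrite /= size_rcons.
  have -> : index u (r1 ++ u :: r2) = size r1.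
    rewrite index_cat.
    have : u \notin r1.
      move: Hu => /= /andP [_]; rewrite cat_uniq => /and3P [_ H _].
      apply/negP => H1; move: H; apply/negP; rewrite negbK.
      by apply/hasP; exists u; rewrite ?inE ?eqxx.
    by move=> /negbTE ->; rewrite /= eqxx addn0.
  move=> /andP [H1 H2]; apply/andP; split; clear -H1 H2; move: (size r1) H1 H2 => m H1 H2; lia.
have HcardN : #|N| <= c - g + 1.
  rewrite cardE -(size_map (index^~ rest)).
  have -> : c - g + 1 = size (iota (g - 2) (c - g + 1)) by rewrite size_iota.
  apply: uniq_leq_size.
    rewrite map_inj_in_uniq ?enum_uniq // => u1 u2.
    rewrite !mem_enum => H1 H2 Heq.
    by rewrite -(nth_index u1 (HN _ H1)) Heq (nth_index u1 (HN _ H2)).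
  move=> j /mapP [u]; rewrite mem_enum => uN ->.
  rewrite mem_iota; have /andP [H1 H2] := Hidx u uN; apply/andP; split; clear -H1 H2 Hg; move: (index u rest) H1 H2 => m H1 H2; lia.
pose C := f @: N.
have HC : #|C| < k by apply: leq_ltn_trans (leq_imset_card _ _) _; lia.
case: (pickP (fun i => i \notin C)) => [i0 Hi0 | Hnone]; last first.
  have : [set: 'I_k] \subset C.
    apply/subsetP => i _; move: (Hnone i) => /=; by case: (i \in C).
  move/subset_leq_card; rewrite cardsT card_ord => H; move: H HC; move: #|C| => m; lia.
exists (fun x => if x == v0 then i0 else f x) => i s Hs HsA Hmono.
case Hv0s: (v0 \in s).
  have Hcy : cycle e s by case/and3P: Hs.
  set u := prev s v0.
  have Heu : e u v0 by apply: prev_cycle.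
  have us : u \in s by rewrite mem_prev.
  have Hne : u != v0 by apply/eqP => Huv; move: (Hloop u); rewrite {2}Huv Heu.
  have uN : u \in N by rewrite inE (allP HsA u us) Heu.
  have := allP Hmono u us; have := allP Hmono v0 Hv0s.
  rewrite eqxx (negbTE Hne) => /eqP Hie /eqP Hfu; rewrite -Hie in Hfu.
  by move: Hi0; rewrite -Hfu (imset_f f uN).
apply: (Hf i s Hs).
  apply/allP => x xs; rewrite !inE (allP HsA x xs) andbT.
  by apply/negP => /eqP Hx; move: Hv0s; rewrite -Hx xs.
apply/allP => x xs; have := allP Hmono x xs.
case: (x =P v0) => // Hx; by move: Hv0s; rewrite -Hx xs.
Qed.

End Proof.

Theorem mainTheorem11 (V : finType) (e : rel V) (g c : nat) :
  loopless e -> has_cycle e ->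
  is_girth e g -> is_circumference e c ->
  g - 1 <= c - g + 2 ->
  dichromatic e <= c - g + 2.
Proof.
move=> Hl _ [[s0 [Hs0 Hsz]] Hgm] [_ Hcm] _.
have Hg : 2 <= g.
  rewrite -Hsz; case/and3P: Hs0; case: s0 {Hsz} => // x [|y s] _ //=.
  by rewrite andbT (negbTE (Hl x)).
have Hcyc : forall s, dcycle e s -> g <= size s <= c.
  by move=> s Hs; rewrite Hgm // Hcm.
have Hgc : g <= c by have := Hcyc _ Hs0; rewrite Hsz; case/andP.
have Hk : c - g + 1 < c - g + 2 by lia.
have [f Hf] := color_set Hl Hcyc Hg Hk [set: V].
have Hcol : acyclic_colorable e (c - g + 2).
  exists f => i s Hs; apply: Hf => //; by apply/allP => x _; rewrite inE.
rewrite /dichromatic; case: excluded_middle_informative => [H|H].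
  case: ex_minnP => m _; apply; by apply/pbP.
exfalso; apply: H; exists (c - g + 2); by apply/pbP.
Qed.
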